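(* Let $p\in(1,2)$. There exists a constant $C_p>0$ such that for all real numbers $a,b$ and every $\mu\in(0,1)$ with $|a-b|\ge\mu\max(|a|,|b|)$, $G(a-b)\le\frac{C_p}{\mu^{2-p}}(a-b)\big(g(a)-g(b)\big).$
   Context: $g(y)=\operatorname{sgn}(y)[(|y|+1)^{p-1}-1]$ and $G(y)=\int_0^yg(s)\,ds=\frac1p[(|y|+1)^p-1]-|y|$. *)

(* Defs.v *)
From Stdlib Require Import Reals.
Open Scope R_scope.

Definition sgn (y : R) : R :=
  if Rlt_dec 0 y then 1 else if Rlt_dec y 0 then -1 else 0.

Definition g (p y : R) : R :=
  sgn y * (Rpower (Rabs y + 1) (p - 1) - 1).

Definition G (p y : R) : R :=
  / p * (Rpower (Rabs y + 1) p - 1) - Rabs y.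

(* Main.v *)
Require Import Defs.
From Stdlib Require Import Reals Lra.
Open Scope R_scope.
Lemma exp_le' a b : a <= b -> exp a <= exp b.
Proof. intros H; destruct (Rle_lt_or_eq_dec _ _ H) as [H1|H1].
 left; now apply exp_increasing. subst; lra. Qed.
Lemma ln_le' a b : 0 < a -> a <= b -> ln a <= ln b.
Proof. intros H0 H; destruct (Rle_lt_or_eq_dec _ _ H) as [H1|H1].
 left; now apply ln_increasing. subst; lra. Qed.
Lemma Rpower_dec c x y : c <= 0 -> 0 < x <= y -> Rpower y c <= Rpower x c.
Proof. intros Hc [Hx Hxy]. unfold Rpower. apply exp_le'.
 pose proof (ln_le' x y Hx Hxy). nra. Qed.
Lemma Rpower_inc c x y : 0 <= c -> 0 < x <= y -> Rpower x c <= Rpower y c.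
Proof. intros; now apply Rle_Rpower_l. Qed.
Lemma Rpower_pos' x c : 0 < Rpower x c.
Proof. unfold Rpower; apply exp_pos. Qed.
Lemma Rpower_1b c : Rpower 1 c = 1.
Proof. unfold Rpower. rewrite ln_1, Rmult_0_r. apply exp_0. Qed.
Lemma mvt r X Y : 0 < Y < X -> exists c, Y < c < X /\
  Rpower X r - Rpower Y r = r * Rpower c (r - 1) * (X - Y).
Proof. intros [HY HXY].
 destruct (MVT_cor2 (fun x => Rpower x r) (fun x => r * Rpower x (r-1)) Y X HXY) as [c [Hc1 Hc2]].
 - intros c Hc. apply derivable_pt_lim_power. lra.
 - exists c; split; [lra|]. exact Hc1.
Qed.
Lemma tangent q X Y : 0 < q < 1 -> 0 < X -> 0 < Y ->
  Rpower Y q <= Rpower X q + q * Rpower X (q-1) * (Y - X).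
Proof. intros Hq HX HY.
 destruct (Rtotal_order X Y) as [H|[H|H]].
 - destruct (mvt q Y X ltac:(lra)) as [c [Hc E]].
   pose proof (Rpower_dec (q-1) X c ltac:(lra) ltac:(lra)).
   assert (0 <= (Rpower X (q-1) - Rpower c (q-1)) * (q * (Y - X))) by (apply Rmult_le_pos; nra). nra.
 - subst. lra.
 - destruct (mvt q X Y ltac:(lra)) as [c [Hc E]].
   pose proof (Rpower_dec (q-1) c X ltac:(lra) ltac:(lra)).
   assert (0 <= (Rpower c (q-1) - Rpower X (q-1)) * (q * (X - Y))) by (apply Rmult_le_pos; nra). nra.
Qed.
Lemma convex_up p u : 1 < p -> 1 <= u ->
  Rpower u p - 1 <= p * Rpower u (p-1) * (u - 1).
Proof. intros Hp Hu. destruct (Rle_lt_or_eq_dec _ _ Hu) as [H|H].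
 - destruct (mvt p u 1 ltac:(lra)) as [c [Hc E]]. rewrite Rpower_1b in E.
   pose proof (Rpower_inc (p-1) c u ltac:(lra) ltac:(lra)).
   assert (0 <= (Rpower u (p-1) - Rpower c (p-1)) * (p * (u - 1))) by (apply Rmult_le_pos; nra). nra.
 - subst. rewrite Rpower_1b. lra.
Qed.
Lemma g_nonneg p y : 0 <= y -> g p y = Rpower (y+1) (p-1) - 1.
Proof. intros H. unfold g, sgn. rewrite Rabs_right by lra.
 destruct (Rlt_dec 0 y). lra. assert (y = 0) by lra. subst.
 destruct (Rlt_dec 0 0); [lra|]. rewrite Rplus_0_l, Rpower_1b. lra. Qed.
Lemma g_nonpos p y : y <= 0 -> g p y = -(Rpower (-y+1) (p-1) - 1).
Proof. intros H. unfold g, sgn. rewrite Rabs_left1 by lra.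
 destruct (Rlt_dec 0 y). lra. destruct (Rlt_dec y 0). lra. assert (y = 0) by lra. subst.
 rewrite Ropp_0, Rplus_0_l, Rpower_1b. lra. Qed.
Lemma diff_lb p x y : 1 < p < 2 -> 0 <= y <= x ->
  (p-1) * Rpower (x+1) (p-2) * (x-y) <= Rpower (x+1) (p-1) - Rpower (y+1) (p-1).
Proof. intros Hp Hxy. pose proof (tangent (p-1) (x+1) (y+1) ltac:(lra) ltac:(lra) ltac:(lra)).
 replace (p-1-1) with (p-2) in H by ring. nra. Qed.
Lemma key_ab p a b : 1 < p < 2 -> b <= a ->
  (p-1) * Rpower (Rmax (Rabs a) (Rabs b) + 1) (p-2) * (a-b) <= g p a - g p b.
Proof. intros Hp Hab.
 set (M := Rmax (Rabs a) (Rabs b)).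
 assert (HMa : Rabs a <= M) by apply Rmax_l.
 assert (HMb : Rabs b <= M) by apply Rmax_r.
 pose proof (Rabs_pos a).
 set (K := Rpower (M+1) (p-2)).
 destruct (Rle_dec 0 b) as [Hb|Hb].
 - rewrite (g_nonneg p a) by lra. rewrite (g_nonneg p b) by lra.
   rewrite Rabs_right in HMa by lra.
   pose proof (diff_lb p a b Hp ltac:(lra)).
   pose proof (Rpower_dec (p-2) (a+1) (M+1) ltac:(lra) ltac:(lra)).
   assert (0 <= (Rpower (a+1) (p-2) - K) * ((p-1)*(a-b))) by (apply Rmult_le_pos; unfold K; nra). unfold K in *. nra.
 - destruct (Rle_dec a 0) as [Ha|Ha].
   + rewrite (g_nonpos p a) by lra. rewrite (g_nonpos p b) by lra.
     rewrite Rabs_left1 in HMb by lra.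
     pose proof (diff_lb p (-b) (-a) Hp ltac:(lra)).
     pose proof (Rpower_dec (p-2) (-b+1) (M+1) ltac:(lra) ltac:(lra)).
     assert (0 <= (Rpower (-b+1) (p-2) - K) * ((p-1)*(a-b))) by (apply Rmult_le_pos; unfold K; nra). unfold K in *. nra.
   + rewrite (g_nonneg p a) by lra. rewrite (g_nonpos p b) by lra.
     rewrite Rabs_left1 in HMb by lra. rewrite Rabs_right in HMa by lra.
     pose proof (diff_lb p a 0 Hp ltac:(lra)).
     pose proof (diff_lb p (-b) 0 Hp ltac:(lra)).
     rewrite Rplus_0_l, Rpower_1b in *.
     pose proof (Rpower_dec (p-2) (-b+1) (M+1) ltac:(lra) ltac:(lra)).
     pose proof (Rpower_dec (p-2) (a+1) (M+1) ltac:(lra) ltac:(lra)).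
     assert (0 <= (Rpower (-b+1) (p-2) - K) * ((p-1)*(-b))) by (apply Rmult_le_pos; unfold K; nra).
     assert (0 <= (Rpower (a+1) (p-2) - K) * ((p-1)*(a))) by (apply Rmult_le_pos; unfold K; nra).
     unfold K in *. nra.
Qed.

Lemma key p a b : 1 < p < 2 ->
  (p-1) * Rpower (Rmax (Rabs a) (Rabs b) + 1) (p-2) * (a-b)^2 <= (a-b) * (g p a - g p b).
Proof. intros Hp. destruct (Rle_dec b a) as [H|H].
 - pose proof (key_ab p a b Hp H). nra.
 - pose proof (key_ab p b a Hp ltac:(lra)). rewrite Rmax_comm in H0. nra.
Qed.

Lemma Gbound p d : 1 < p < 2 -> G p d <= d^2 * Rpower (Rabs d + 1) (p-2).
Proof. intros Hp. unfold G. set (u := Rabs d + 1).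
 assert (Hu : 1 <= u) by (unfold u; pose proof (Rabs_pos d); lra).
 pose proof (convex_up p u ltac:(lra) Hu).
 assert (E : Rpower u (p-1) = Rpower u (p-2) * u).
 { replace (p-1) with ((p-2)+1) by ring. rewrite Rpower_plus, Rpower_1 by lra. reflexivity. }
 pose proof (Rpower_dec (p-2) 1 u ltac:(lra) ltac:(lra)). rewrite Rpower_1b in H0.
 assert (Hd : d^2 = (u-1)^2). { unfold u. replace (Rabs d + 1 - 1) with (Rabs d) by ring.
   rewrite <- pow2_abs. reflexivity. }
 rewrite Hd.
 assert (/ p * (Rpower u p - 1) <= Rpower u (p-1) * (u-1)).
 { apply Rle_trans with (/p * (p * Rpower u (p - 1) * (u - 1))).
   apply Rmult_le_compat_l; [left; apply Rinv_0_lt_compat; lra| exact H].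
   right; field; lra. }
 rewrite E in H1. pose proof (Rpower_pos' u (p-2)). replace (Rabs d) with (u-1) by (unfold u; ring). assert (0 <= (u-1)*(1-Rpower u (p-2))) by (apply Rmult_le_pos; lra). nra.
Qed.

Theorem mainTheorem16 (p : R) (hp : 1 < p < 2) :
  exists Cp : R, 0 < Cp /\
    forall (a b mu : R), 0 < mu < 1 ->
      Rabs (a - b) >= mu * Rmax (Rabs a) (Rabs b) ->
      G p (a - b) <= Cp / Rpower mu (2 - p) * ((a - b) * (g p a - g p b)).
Proof.
 exists (/ (p-1)). split. apply Rinv_0_lt_compat; lra.
 intros a b mu Hmu H.
 pose proof (key p a b hp) as K1.
 set (M := Rmax (Rabs a) (Rabs b)) in *.
 set (d := a - b) in *.
 assert (HM : 0 <= M) by (unfold M; pose proof (Rabs_pos a); pose proof (Rmax_l (Rabs a) (Rabs b)); lra).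
 pose proof (Rabs_pos d).
 assert (HM1 : M + 1 <= (Rabs d + 1) * / mu).
 { apply Rmult_le_reg_r with mu; [lra|]. rewrite Rmult_assoc, Rinv_l by lra. nra. }
 pose proof (Rpower_dec (p-2) (M+1) ((Rabs d + 1) * / mu) ltac:(lra) ltac:(lra)) as K2.
 rewrite <- Rpower_mult_distr in K2 by (try apply Rinv_0_lt_compat; lra).
 assert (Emu : Rpower (/ mu) (p-2) = Rpower mu (2-p)).
 { unfold Rpower. rewrite ln_Rinv by lra. f_equal. ring. }
 rewrite Emu in K2.
 pose proof (Gbound p d hp) as K3.
 set (w := Rpower (Rabs d + 1) (p-2)) in *.
 set (m := Rpower mu (2-p)) in *.
 set (K := Rpower (M+1) (p-2)) in *.
 assert (Hm : 0 < m) by apply Rpower_pos'.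
 assert (Hw : 0 < w) by apply Rpower_pos'.
 assert (Hc : 0 < / (p-1) / m) by (unfold Rdiv; apply Rmult_lt_0_compat; apply Rinv_0_lt_compat; lra).
 assert (X : (p-1) * (w * m) * d^2 <= d * (g p a - g p b)).
 { apply Rle_trans with ((p-1) * K * d^2); [|exact K1].
   apply Rmult_le_compat_r; [nra|]. apply Rmult_le_compat_l; lra. }
 apply Rle_trans with (/ (p-1) / m * ((p-1) * (w * m) * d^2)).
 - replace (/ (p-1) / m * ((p-1) * (w * m) * d^2)) with (d^2 * w) by (field; lra). exact K3.
 - apply Rmult_le_compat_l; lra.
Qed.
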